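(* Fix $\kappa_r>0$. For $\lambda_r\in\mathbb{R}$, let $\gamma_r$ be a random variable on $(0,\infty)$ with density proportional to $\gamma^{-1/2}\exp\!\left(-\frac{\lambda_r^2+\kappa_r\gamma^2}{2\gamma}\right)$, and let $\kappa'_r$ be a random variable on $(0,\infty)$ with density proportional to $\kappa\exp\!\left(-\frac{\mathbb{E}[\gamma_r]\,\kappa}{2}\right)$ (a Gamma distribution with shape $2$ and rate $\mathbb{E}[\gamma_r]/2$). Then there exists a decreasing function $\rho:[0,\infty)\to(0,\infty)$, depending only on $\kappa_r$, such that $\mathbb{E}[\kappa'_r] = \rho(|\lambda_r|)$ for every $\lambda_r\in\mathbb{R}$.
   Context: In the paper's Gibbs sampler, $\kappa_r$ is resampled from $\mathrm{Gamma}(\text{shape }2,\text{ rate }\gamma_r/2)$, and the theorem concerns this update with $\gamma_r$ replaced by its conditional expectation given $\lambda_r$ and the current value of $\kappa_r$. *)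

(* Defs.v *)
From HB Require Import structures.
From mathcomp Require Import all_boot all_order all_algebra.
From mathcomp Require Import all_classical all_reals all_analysis.
Set Implicit Arguments. Unset Strict Implicit. Unset Printing Implicit Defensive.
Import Order.TTheory GRing.Theory Num.Theory.
Local Open Scope ring_scope.
Local Open Scope classical_set_scope.

(* Mean of the probability distribution on (0, +oo) whose density is
   proportional to the (nonnegative, integrable) function f:
   (int_0^oo x f(x) dx) / (int_0^oo f(x) dx), Lebesgue integrals. *)
Definition mean_prop_density (R : realType) (f : R -> R) : R :=
  Rintegral (@lebesgue_measure R) [set x : R | 0 < x] (fun x => x * f x) /
  Rintegral (@lebesgue_measure R) [set x : R | 0 < x] f.

Definition gamma_dens (R : realType) (kappa lam : R) (g : R) : R :=
  powR g (- (1 / 2)) * expR (- ((lam ^+ 2 + kappa * g ^+ 2) / (2 * g))).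

Definition mean_gamma (R : realType) (kappa lam : R) : R :=
  mean_prop_density (gamma_dens kappa lam).

Definition kappa_dens (R : realType) (Eg : R) (k : R) : R :=
  k * expR (- (Eg * k / 2)).

Definition mean_kappa_new (R : realType) (kappa lam : R) : R :=
  mean_prop_density (kappa_dens (mean_gamma kappa lam)).

(* Main.v *)
Require Import Defs.
From HB Require Import structures.
From mathcomp Require Import all_boot all_order all_algebra.
From mathcomp Require Import all_classical all_reals all_analysis.
From mathcomp Require Import ring lra zify.
From mathcomp Require Import measurable_realfun.
Import Order.TTheory GRing.Theory Num.Theory.
Import numFieldTopology.Exports numFieldNormedType.Exports.
Local Open Scope ring_scope.

Section S.
Local Open Scope classical_set_scope.
Context {R : realType}.
Local Notation mu := (@lebesgue_measure R).
Local Notation RT := (measurableTypeR R).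

Lemma xle_expR (r x : R) : 0 < r -> x <= r^-1 * expR (r * x).
Proof.
move=> r0; rewrite -(ler_pM2l r0) mulrA mulfV ?gt_eqF// mul1r.
have := expR_ge1Dx (r * x); lra.
Qed.

Lemma exp_dom_integrable (A : set RT) (f : R -> R) (M r : R) :
  measurable A -> A `<=` `[0, +oo[ -> 0 < r -> 0 <= M ->
  measurable_fun A f ->
  (forall x, A x -> `|f x| <= M * expR (- (r * x))) ->
  mu.-integrable A (EFin \o f).
Proof.
move=> mA A0 r0 M0 mf fle.
have ie : mu.-integrable A (EFin \o exponential_pdf r).
  have H := integrable_exponential_pdf r0.
  apply: (integrableS _ _ _ H) => //.
have ie2 := integrableZl mA (M / r) ie.
apply: (le_integrable mA _ _ ie2) => [|x Ax]; first exact/measurable_EFinP.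
rewrite /= lee_fin /exponential_pdf patchE mem_set; last exact: A0.
rewrite [X in _ <= X]ger0_norm; last first.
  apply: mulr_ge0; [apply: divr_ge0 => //; exact: ltW | apply: mulr_ge0; [exact: ltW | exact: expR_ge0]].
suff -> : M / r * (r * expR (- r * x)) = M * expR (- (r * x)) by exact: fle.
by rewrite mulNr; field; rewrite gt_eqF.
Qed.

Lemma powR_cont (p a : R) : 0 < a -> {for a, continuous (fun y : R => powR y p)}.
Proof.
move=> x0; apply: differentiable_continuous; apply/derivable1_diffP.
by apply: derivable_powR; rewrite in_itv/= andbT.
Qed.

Definition f12 (x : R) := 2^-1 * powR x (2^-1 - 1).

Lemma f12_cont (a : R) : 0 < a -> {for a, continuous f12}.
Proof.
move=> x0; apply: continuousM; [exact: cst_continuous | exact: powR_cont].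
Qed.

Lemma f12_int : mu.-integrable (`]0, 1]%classic : set RT) (EFin \o f12).
Proof.
have mf : measurable_fun (`]0, 1]%classic : set RT) f12.
  apply: (measurable_funS (E := (`]0, +oo[%classic : set RT))).
  - exact: measurable_itv.
  - by move=> x /=; rewrite !in_itv /= => /andP[-> _].
  - apply: open_continuous_measurable_fun; first exact: interval_open.
    by move=> x; rewrite inE/= in_itv/= andbT; exact: f12_cont.
have f0 x : 0 <= f12 x by rewrite /f12 mulr_ge0 ?powR_ge0.
apply/integrableP; split; first exact/measurable_EFinP.
pose F n : set RT := `[(n.+2%:R)^-1, 1]%classic.
have UF : \bigcup_n F n = `]0, 1]%classic.
  apply/seteqP; split => x /=.
    move=> [n _]; rewrite /F /= !in_itv/= => /andP[xn ->]; rewrite andbT.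
    by apply: lt_le_trans xn.
  rewrite in_itv/= => /andP[x0 x1].
  have [k kx] := ltr_add_invr x0; rewrite add0r in kx.
  exists k => //; rewrite /F/= in_itv/= x1 andbT.
  apply: le_trans (ltW kx); rewrite lef_pV2 ?posrE// ler_nat; lia.
have ndF : {homo F : n m / (n <= m)%N >-> (n <= m)%O}.
  move=> n m nm; rewrite /F/= subsetEset; apply: subset_itv => //.
  by rewrite bnd_simp lef_pV2 ?posrE// ler_nat; lia.
have mF n : measurable (F n) by exact: measurable_itv.
have mfF n : measurable_fun (F n) (EFin \o f12).
  apply/measurable_EFinP; apply: measurable_funS mf => //.
  move=> x; rewrite /F/= !in_itv/= => /andP[xn ->]; rewrite andbT.
  by apply: lt_le_trans xn.
have cvgF := @ge0_nondecreasing_set_cvg_integral _ _ _ F (EFin \o f12) mu ndF mF mfF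
  (fun n x _ => f0 x).
under eq_integral => x _.
  rewrite /comp abse_EFin ger0_norm//.
  over.
rewrite /=.
rewrite -UF -(cvg_lim _ cvgF) //.
apply: (@le_lt_trans _ _ 1%E); last exact: ltry.
apply: lime_le; first exact: (cvgP _ cvgF).
apply: nearW => n.
have an : (n.+2%:R^-1 : R) < 1 by rewrite invf_lt1 ?ltr1n.
have a0 : (0 : R) < n.+2%:R^-1 by [].
rewrite /F (@continuous_FTC2 _ f12 (fun y : R => powR y 2^-1)) //.
- rewrite powR1 lee_fin lerBlDr lerDl; exact: powR_ge0.
- apply: continuous_in_subspaceT => x; rewrite inE/= in_itv/= => /andP[ax _].
  by apply: f12_cont; apply: lt_le_trans ax.
- split.
  + move=> x; rewrite in_itv/= => /andP[ax _].
    by apply: derivable_powR; rewrite in_itv/= andbT; apply: lt_trans ax.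
  + by apply: cvg_at_right_filter; apply: powR_cont.
  + by apply: cvg_at_left_filter; apply: powR_cont.
- move=> x; rewrite in_itv/= => /andP[ax _].
  by rewrite powR_derive1 // in_itv/= andbT; apply: lt_trans ax.
Qed.

Lemma Rint_pos (f : R -> R) (a b : R) :
  0 < a -> a < b ->
  (forall x, 0 < x -> 0 <= f x) ->
  {in `[a, b], continuous f} -> (forall x, a <= x <= b -> 0 < f x) ->
  mu.-integrable (`]0, +oo[%classic : set RT) (EFin \o f) ->
  0 < Rintegral mu (`]0, +oo[%classic : set RT) f.
Proof.
move=> a0 ab f0 cf fpos fi.
have [c cab cmin] := EVT_min (ltW ab) (continuous_in_subspaceT cf).
have fc : 0 < f c by apply: fpos; move: cab; rewrite in_itv.
have mf : measurable_fun (`]0, +oo[%classic : set RT) (EFin \o f).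
  by case/integrableP: fi.
have sub : (`[a, b]%classic : set RT) `<=` `]0, +oo[%classic.
  by move=> x /=; rewrite !in_itv/= andbT => /andP[ax _]; apply: lt_le_trans ax.
rewrite /Rintegral -lte_fin fineK; last exact: integrable_fin_num.
apply: (@lt_le_trans _ _ ((f c * (b - a))%:E)).
  by rewrite lte_fin mulr_gt0 // subr_gt0.
have mab : measurable (`[a, b]%classic : set RT) by exact: measurable_itv.
have m0 : measurable (`]0, +oo[%classic : set RT) by exact: measurable_itv.
apply: (@le_trans _ _ (\int[mu]_(x in (`[a, b]%classic : set RT)) (f x)%:E)%E).
  have -> : ((f c * (b - a))%:E = \int[mu]_(x in (`[a, b]%classic : set RT)) cst (f c)%:E x)%E.
    rewrite (integral_cst _ mab) EFinM; congr (_ * _)%E.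
    have H := @lebesgue_measure_itv R `[a, b]%R; rewrite /= lte_fin ab in H.
    by rewrite EFinB; apply/esym; exact: H.
  apply: (ge0_le_integral _ mab).
  - by move=> x _; rewrite lee_fin ltW.
  - by [].
  - exact: measurable_funS mf.
  - by move=> x xab; rewrite lee_fin; apply: cmin; rewrite inE.
apply: (ge0_subset_integral _ mab m0) => //.
- by move=> x x0; rewrite lee_fin; apply: f0; move: x0 => /=; rewrite in_itv/= andbT.
Qed.


Local Notation D0 := (`]0, +oo[%classic : set RT).
Definition I0 (f : R -> R) := Rintegral mu D0 f.
Definition mean0 (f : R -> R) := I0 (fun x => x * f x) / I0 f.
Local Notation int f := (mu.-integrable D0 (EFin \o f)).

Lemma mD0 : measurable D0. Proof. exact: measurable_itv. Qed.

Lemma intD (a b : R -> R) : int a -> int b -> int (fun x => a x + b x).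
Proof.
move=> ia ib; apply: (eq_integrable mD0 _ _ _ (integrableD mD0 ia ib)).
by move=> x _ /=; rewrite EFinD.
Qed.

Lemma intB (a b : R -> R) : int a -> int b -> int (fun x => a x - b x).
Proof.
move=> ia ib; apply: (eq_integrable mD0 _ _ _ (integrableB mD0 ia ib)).
by move=> x _ /=; rewrite EFinB.
Qed.

Lemma intZ (k : R) (a : R -> R) : int a -> int (fun x => k * a x).
Proof.
move=> ia; apply: (eq_integrable mD0 _ _ _ (integrableZl mD0 k ia)).
by move=> x _ /=; rewrite EFinM.
Qed.

Lemma I0_lin (a b c e : R -> R) (p q s : R) :
  int a -> int b -> int c -> int e ->
  I0 (fun x => a x - p * b x - q * c x + s * e x) =
  I0 a - p * I0 b - q * I0 c + s * I0 e.
Proof.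
move=> ia ib ic ie; rewrite /I0.
rewrite RintegralD //; last 2 first.
- by apply: intB; [apply: intB => //; exact: intZ | exact: intZ].
- exact: intZ.
rewrite RintegralB //; last 2 first.
- by apply: intB => //; exact: intZ.
- exact: intZ.
rewrite RintegralB //; last exact: intZ.
by rewrite !RintegralZl.
Qed.

Lemma I0_pos (f : R -> R) :
  (forall x, 0 < x -> 0 < f x) -> {in `]0, +oo[, continuous f} -> int f ->
  0 < I0 f.
Proof.
move=> fp cf fi; apply: (@Rint_pos f 1 2) => //.
- exact: ltr1n.
- by move=> x x0; apply: ltW; apply: fp.
- move=> x xin; apply: cf; move: xin; rewrite inE/= !in_itv/= => /andP[x1 _].
  by rewrite inE/= in_itv/= andbT (lt_le_trans ltr01 x1).
- by move=> x /andP[x1 _]; apply: fp; apply: lt_le_trans x1.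
Qed.

Lemma mean0_pos (f : R -> R) :
  (forall x, 0 < x -> 0 < f x) -> {in `]0, +oo[, continuous f} -> int f ->
  int (fun x => x * f x) -> 0 < mean0 f.
Proof.
move=> fp cf fi xfi; rewrite /mean0 divr_gt0 //; last exact: I0_pos.
apply: I0_pos => //.
- by move=> x x0; rewrite mulr_gt0 // fp.
- move=> x x0; apply: continuousM; last exact: cf.
  exact: cvg_id.
Qed.


Lemma cM (s t : R -> R) (x : R) : {for x, continuous s} -> {for x, continuous t} ->
  {for x, continuous (fun y => s y * t y)}.
Proof. exact: continuousM. Qed.

Lemma cB (s t : R -> R) (x : R) : {for x, continuous s} -> {for x, continuous t} ->
  {for x, continuous (fun y => s y - t y)}.
Proof. exact: continuousB. Qed.

Lemma cC (c x : R) : {for x, continuous (fun _ : R => c)}.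
Proof. exact: cst_continuous. Qed.

Lemma cI (x : R) : {for x, continuous (fun y : R => y)}.
Proof. exact: cvg_id. Qed.

Lemma inD0 (x : R) : (x \in (`]0, +oo[%classic : set R)) = (0 < x).
Proof.
apply/idP/idP => [/set_mem|x0]; first by rewrite /= in_itv/= andbT.
by apply/mem_set; rewrite /= in_itv/= andbT.
Qed.

Lemma tilt (f g h : R -> R) :
  (forall x, 0 < x -> 0 < f x) ->
  (forall x, 0 < x -> 0 < h x) ->
  (forall x, 0 < x -> g x = h x * f x) ->
  (forall x y, 0 < x -> x < y -> h x < h y) ->
  {in `]0, +oo[, continuous f} -> {in `]0, +oo[, continuous h} ->
  int f -> int (fun x => x * f x) -> int g -> int (fun x => x * g x) ->
  mean0 f < mean0 g.
Proof.
move=> fp hp gE hinc cf ch fi xfi gi xgi.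
set m := mean0 f.
have m0 : 0 < m := mean0_pos _ fp cf fi xfi.
have If0 : 0 < I0 f := I0_pos _ fp cf fi.
have hfi : int (fun x => h x * f x).
  apply: (eq_integrable mD0 _ _ _ gi) => x; rewrite inD0 => x0 /=.
  by rewrite gE.
have Ig0 : 0 < I0 g.
  rewrite /I0 (@eq_Rintegral _ RT R mu D0 (fun x => h x * f x)); last first.
    by move=> x; rewrite inD0 => x0; rewrite gE.
  apply: I0_pos => //.
  - by move=> x x0; rewrite mulr_gt0 ?hp ?fp.
  - by move=> x x0; apply: continuousM; [exact: ch | exact: cf].
pose phi x := (x - m) * (h x - h m) * f x.
have mIf : I0 (fun x => x * f x) = m * I0 f.
  by rewrite /m /mean0 divfK // gt_eqF.
have phiE : I0 phi = I0 (fun x => x * g x) - m * I0 g.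
  rewrite /I0 (@eq_Rintegral _ RT R mu D0
    (fun x => x * g x - m * g x - h m * (x * f x) + (m * h m) * f x)); last first.
    move=> x; rewrite inD0 => x0; rewrite /phi gE //; ring.
  have := @I0_lin (fun x => x * g x) g (fun x => x * f x) f m (h m) (m * h m) xgi gi xfi fi.
  rewrite /I0 => ->; move: mIf; rewrite /I0 => ->; ring.
have phii : int phi.
  have i1 := intB _ _ xgi (intZ m _ gi).
  have i2 := intB _ _ i1 (intZ (h m) _ xfi).
  have i3 := intD _ _ i2 (intZ (m * h m) _ fi).
  apply: (eq_integrable mD0 _ _ _ i3).
  move=> x; rewrite inD0 => x0; rewrite /comp /phi gE //; congr EFin; ring.
have : 0 < I0 phi.
  apply: (@Rint_pos phi (m + 1) (m + 2)).
  - by rewrite addr_gt0.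
  - by rewrite ltrD2l ltr1n.
  - move=> x x0; rewrite /phi mulr_ge0 ?(ltW (fp _ _)) //.
    have [xm|mx] := leP x m.
      rewrite mulr_le0 // ?subr_le0 //.
      move: xm; rewrite le_eqVlt => /orP[/eqP -> //|xm].
      exact/ltW/hinc.
    by rewrite mulr_ge0 // subr_ge0 ltW // hinc.
  - move=> x; rewrite inE/= in_itv/= => /andP[x1 _].
    have x0 : 0 < x by apply: lt_le_trans x1; rewrite addr_gt0.
    rewrite /phi; apply: (cM (fun y => (y - m) * (h y - h m)) f); last by apply: cf; rewrite inD0.
    apply: (cM (fun y => y - m) (fun y => h y - h m)).
      exact: (cB _ _ _ (cI x) (cC m x)).
    by apply: (cB _ _ _ _ (cC (h m) x)); apply: ch; rewrite inD0.
  - move=> x /andP[x1 _].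
    have mx : m < x by apply: lt_le_trans x1; rewrite ltrDl.
    rewrite /phi !mulr_gt0 ?subr_gt0 ?hinc ?fp //.
    exact: lt_trans mx.
  - exact: phii.
rewrite phiE subr_gt0 => H.
by rewrite /mean0 -/m ltr_pdivlMr.
Qed.


Lemma cN (s : R -> R) (x : R) : {for x, continuous s} -> {for x, continuous (fun y => - s y)}.
Proof. exact: continuousN. Qed.

Lemma cD (s t : R -> R) (x : R) : {for x, continuous s} -> {for x, continuous t} ->
  {for x, continuous (fun y => s y + t y)}.
Proof. exact: continuousD. Qed.

Lemma cV (s : R -> R) (x : R) : s x != 0 -> {for x, continuous s} ->
  {for x, continuous (fun y => (s y)^-1)}.
Proof. exact: continuousV. Qed.

Lemma cE (s : R -> R) (x : R) : {for x, continuous s} -> {for x, continuous (fun y => expR (s y))}.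
Proof. by move=> cs; apply: (continuous_comp cs); exact: continuous_expR. Qed.

Lemma gamma_dens_cont (k l : R) : {in `]0, +oo[, continuous (gamma_dens k l)}.
Proof.
move=> x; rewrite inD0 => x0; rewrite /gamma_dens.
apply: (cM (fun g => powR g (- (1 / 2)))); first exact: powR_cont.
apply: (cE (fun g => - ((l ^+ 2 + k * g ^+ 2) / (2 * g)))).
apply: (cN (fun g => (l ^+ 2 + k * g ^+ 2) / (2 * g))).
apply: (cM (fun g => (l ^+ 2 + k * g ^+ 2)) (fun g => (2 * g)^-1)).
  apply: (cD (fun _ => l ^+ 2) (fun g => k * g ^+ 2)); first exact: cC.
  apply: (cM (fun _ => k) (fun g => g ^+ 2)); first exact: cC.
  exact: (cM _ _ _ (cI x) (cI x)).
apply: (cV (fun g => 2 * g)); first by rewrite mulf_neq0 ?gt_eqF.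
exact: (cM _ _ _ (cC 2 x) (cI x)).
Qed.

Lemma kappa_dens_cont (c : R) : {in `]0, +oo[, continuous (kappa_dens c)}.
Proof.
move=> x _; rewrite /kappa_dens.
apply: (cM (fun k => k) (fun k => expR (- (c * k / 2)))); first exact: cI.
apply: (cE (fun k => - (c * k / 2))).
apply: (cN (fun k => c * k / 2)).
apply: (cM (fun k => c * k) (fun _ => 2^-1)); last exact: cC.
exact: (cM _ _ _ (cC c x) (cI x)).
Qed.


Lemma int_setU (A B : set RT) (f : R -> R) : measurable A -> measurable B ->
  [disjoint A & B] ->
  mu.-integrable A (EFin \o f) -> mu.-integrable B (EFin \o f) ->
  mu.-integrable (A `|` B) (EFin \o f).
Proof.
move=> mA mB AB iA iB.
case/integrableP: iA => mfA fA; case/integrableP: iB => mfB fB.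
have mfU : measurable_fun (A `|` B) (EFin \o f) by apply/(measurable_funU _ mA mB).
apply/integrableP; split => //.
rewrite (ge0_integral_setU _ mA mB) //.
- exact: lte_add_pinfty.
- exact: (measurableT_comp (f := abse) _ mfU).
Qed.

Lemma D0_split : D0 = (`]0, 1]%classic : set RT) `|` `]1, +oo[%classic.
Proof.
apply/seteqP; split => x /=.
  rewrite in_itv/= andbT => x0.
  have [x1|x1] := leP x 1; [left; rewrite /= in_itv/= x0 x1 // | right; rewrite /= in_itv/= x1 //].
move=> [|]; rewrite /= !in_itv/= ?andbT; first by case/andP.
by move=> x1; apply: lt_trans x1.
Qed.

Lemma D0_disj : [disjoint (`]0, 1]%classic : set RT) & `]1, +oo[%classic].
Proof.
apply/disj_setPS => x [] /=; rewrite !in_itv/= andbT => /andP[_ x1] x1'.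
by move: (le_lt_trans x1 x1'); rewrite ltxx.
Qed.

Lemma int_gammalike (phi : R -> R) (c : R) : 0 < c ->
  {in `]0, +oo[, continuous phi} ->
  (forall x, 0 < x -> 0 <= phi x <= powR x (- (1 / 2)) * expR (- (c * x))) ->
  int phi /\ int (fun x => x * phi x).
Proof.
move=> c0 cphi hb.
have cxphi : {in `]0, +oo[, continuous (fun y : R => y * phi y)}.
  by move=> z zD; apply: (cM (fun y => y) phi); [exact: cI | exact: cphi].
have mphi : measurable_fun D0 phi.
  by apply: open_continuous_measurable_fun => //; exact: interval_open.
have mxphi : measurable_fun D0 (fun x => x * phi x).
  by apply: open_continuous_measurable_fun => //; exact: interval_open.
have mA : measurable (`]0, 1]%classic : set RT) by exact: measurable_itv.
have mB : measurable (`]1, +oo[%classic : set RT) by exact: measurable_itv.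
have sA : (`]0, 1]%classic : set RT) `<=` D0 by rewrite D0_split; exact: subsetUl.
have sB : (`]1, +oo[%classic : set RT) `<=` D0 by rewrite D0_split; exact: subsetUr.
have iA := integrableZl mA 2 f12_int.
have h12 : (2^-1 - 1 : R) = - (1 / 2) by field.
have e2 : forall x : R, 2 * f12 x = powR x (- (1 / 2)).
  by move=> x; rewrite /f12 mulrA divff // h12 !mul1r.
have c20 : 0 < c / 2 by rewrite divr_gt0.
set K := (c / 2)^-1.
have K0 : 0 <= K by rewrite invr_ge0 ltW.
have bnd x : 1 < x -> 0 <= phi x <= expR (- (c / 2 * x)) /\
    x * phi x <= K * expR (- (c / 2 * x)).
  move=> x1; have x0 : 0 < x by apply: lt_trans x1.
  have /andP[p0 pb] := hb x x0.
  set E := expR (- (c / 2 * x)).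
  have E0 : 0 <= E by exact: expR_ge0.
  have E1 : E <= 1 by rewrite expR_le1 oppr_le0 mulr_ge0 // ltW.
  have EE : expR (- (c * x)) = E * E by rewrite -expRD; congr expR; field.
  have pw : powR x (- (1 / 2)) <= 1.
    apply: (@le_trans _ _ (powR x 0)); last by rewrite powRr0.
    apply: ler_powR; first exact: ltW.
    by rewrite oppr_le0 divr_ge0.
  have pw0 : 0 <= powR x (- (1 / 2)) by exact: powR_ge0.
  have xE : x * E <= K.
    have h := xle_expR (c / 2) x c20; rewrite -/K in h.
    have : x * E <= K * expR (c / 2 * x) * E by rewrite ler_wpM2r.
    by rewrite -mulrA -expRD addrN expR0 mulr1.
  rewrite EE in pb.
  have pb2 : phi x <= E * E by apply: (le_trans pb); rewrite ler_piMl // mulr_ge0.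
  have EE1 : E * E <= E by rewrite ler_piMl.
  split; first by rewrite p0 (le_trans pb2).
  apply: (@le_trans _ _ (x * (E * E))); first by rewrite ler_wpM2l // ltW.
  by rewrite mulrA ler_wpM2r.
have iB1 : mu.-integrable (`]1, +oo[%classic : set RT) (EFin \o phi).
  apply: (@exp_dom_integrable _ phi (1 + K) (c / 2)) => //.
  - by move=> x /=; rewrite !in_itv/= !andbT => x1; apply: ltW; apply: lt_trans x1.
  - by rewrite addr_ge0.
  - exact: measurable_funS mphi.
  - move=> x /=; rewrite in_itv/= andbT => x1.
    have [/andP[p0 pb] _] := bnd x x1.
    rewrite ger0_norm //; apply: (le_trans pb).
    by rewrite ler_pMl ?expR_gt0 // lerDl.
have iB2 : mu.-integrable (`]1, +oo[%classic : set RT) (EFin \o (fun x => x * phi x)).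
  apply: (@exp_dom_integrable _ _ (1 + K) (c / 2)) => //.
  - by move=> x /=; rewrite !in_itv/= !andbT => x1; apply: ltW; apply: lt_trans x1.
  - by rewrite addr_ge0.
  - exact: measurable_funS mxphi.
  - move=> x /=; rewrite in_itv/= andbT => x1.
    have [/andP[p0 pb] xb] := bnd x x1.
    rewrite ger0_norm ?mulr_ge0 //; last by apply: ltW; apply: lt_trans x1.
    apply: (le_trans xb).
    by rewrite ler_wpM2r ?expR_ge0 // lerDr.
have iA1 : mu.-integrable (`]0, 1]%classic : set RT) (EFin \o phi).
  apply: (le_integrable mA _ _ iA); first by apply/measurable_EFinP; exact: measurable_funS mphi.
  move=> x /=; rewrite in_itv/= => /andP[x0 x1].
  have /andP[p0 pb] := hb x x0.
  rewrite lee_fin e2 ger0_norm // ger0_norm ?powR_ge0 //.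
  apply: (le_trans pb); rewrite ler_piMr ?powR_ge0 //.
  by rewrite expR_le1 oppr_le0 mulr_ge0 // ltW.
have iA2 : mu.-integrable (`]0, 1]%classic : set RT) (EFin \o (fun x => x * phi x)).
  apply: (le_integrable mA _ _ iA); first by apply/measurable_EFinP; exact: measurable_funS mxphi.
  move=> x /=; rewrite in_itv/= => /andP[x0 x1].
  have /andP[p0 pb] := hb x x0.
  rewrite lee_fin e2 (ger0_norm (powR_ge0 _ _)) ger0_norm; last by rewrite mulr_ge0 // ltW.
  apply: (@le_trans _ _ (phi x)); first by rewrite ler_piMl.
  apply: (le_trans pb).
  rewrite ler_piMr ?powR_ge0 //.
  by rewrite expR_le1 oppr_le0 mulr_ge0 // ltW.
by rewrite D0_split; split; apply: int_setU => //; exact: D0_disj.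
Qed.


Lemma int_kappalike (phi : R -> R) (c : R) : 0 < c ->
  {in `]0, +oo[, continuous phi} ->
  (forall x, 0 < x -> 0 <= phi x <= x * expR (- (c * x))) ->
  int phi /\ int (fun x => x * phi x).
Proof.
move=> c0 cphi hb.
have cxphi : {in `]0, +oo[, continuous (fun y : R => y * phi y)}.
  by move=> z zD; apply: (cM (fun y => y) phi); [exact: cI | exact: cphi].
have mphi : measurable_fun D0 phi.
  by apply: open_continuous_measurable_fun => //; exact: interval_open.
have mxphi : measurable_fun D0 (fun x => x * phi x).
  by apply: open_continuous_measurable_fun => //; exact: interval_open.
have c40 : 0 < c / 4 by rewrite divr_gt0.
set K := (c / 4)^-1.
have K0 : 0 <= K by rewrite invr_ge0 ltW.
have bnd x : 0 < x -> 0 <= phi x <= (K + K * K) * expR (- (c / 4 * x)) /\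
    0 <= x * phi x <= (K + K * K) * expR (- (c / 4 * x)).
  move=> x0.
  have /andP[p0 pb] := hb x x0.
  set E := expR (- (c / 4 * x)).
  have E0 : 0 <= E by exact: expR_ge0.
  have E1 : E <= 1 by rewrite expR_le1 oppr_le0 mulr_ge0 // ltW.
  have EE : expR (- (c * x)) = E * E * E * E by rewrite -!expRD; congr expR; field.
  have xE : x * E <= K.
    have h := xle_expR (c / 4) x c40; rewrite -/K in h.
    have : x * E <= K * expR (c / 4 * x) * E by rewrite ler_wpM2r.
    by rewrite -mulrA -expRD addrN expR0 mulr1.
  rewrite EE in pb.
  have xE0 : 0 <= x * E by rewrite mulr_ge0 // ltW.
  have EEE : E * E * E <= 1 by rewrite !mulr_ile1 ?mulr_ge0.
  have b1 : phi x <= K * E.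
    apply: (le_trans pb).
    rewrite (_ : x * (E * E * E * E) = (x * E) * (E * E * E)); last by ring.
    rewrite [K * E]mulrC.
    apply: (@le_trans _ _ (K * (E * E * E))); first by rewrite ler_wpM2r ?mulr_ge0.
    rewrite (_ : K * (E * E * E) = (K * E) * (E * E)); last by ring.
    by rewrite [E * K]mulrC ler_piMr ?mulr_ge0 ?mulr_ile1.
  have b2 : x * phi x <= K * K * E.
    apply: (@le_trans _ _ (x * (x * (E * E * E * E)))); first by rewrite ler_wpM2l // ltW.
    rewrite (_ : x * (x * (E * E * E * E)) = (x * E) * (x * E) * (E * E)); last by ring.
    apply: (@le_trans _ _ (K * K * (E * E))).
      by rewrite ler_wpM2r ?mulr_ge0 // ler_pM.
    by rewrite ler_wpM2l ?mulr_ge0 // ler_piMr.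
  have KE0 : 0 <= K * E by rewrite mulr_ge0.
  have KKE0 : 0 <= K * K * E by rewrite !mulr_ge0.
  split; apply/andP; split => //.
  - by rewrite (le_trans b1) // mulrDl lerDl.
  - by rewrite mulr_ge0 // ltW.
  - by rewrite (le_trans b2) // mulrDl lerDr.
have sub : D0 `<=` `[0, +oo[ by move=> x /=; rewrite !in_itv/= !andbT => /ltW.
split.
- apply: (exp_dom_integrable D0 phi (K + K * K) (c / 4) mD0 sub c40) => //.
  + by rewrite addr_ge0 ?mulr_ge0.
  + move=> x /=; rewrite in_itv/= andbT => x0.
    by have [/andP[p0 pb] _] := bnd x x0; rewrite ger0_norm.
- apply: (exp_dom_integrable D0 (fun x => x * phi x) (K + K * K) (c / 4) mD0 sub c40) => //.
  + by rewrite addr_ge0 ?mulr_ge0.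
  + move=> x /=; rewrite in_itv/= andbT => x0.
    by have [_ /andP[p0 pb]] := bnd x x0; rewrite ger0_norm.
Qed.


Lemma mpdE (f : R -> R) : mean_prop_density f = mean0 f.
Proof.
rewrite /mean_prop_density /mean0 /I0.
have -> : [set x : R | 0 < x] = (`]0, +oo[%classic : set R).
  by apply/seteqP; split => x /=; rewrite in_itv/= andbT.
by [].
Qed.

Section gamma.
Variable k : R.
Hypothesis k0 : 0 < k.

Lemma gd_pos (l x : R) : 0 < x -> 0 < gamma_dens k l x.
Proof. by move=> x0; rewrite /gamma_dens mulr_gt0 ?powR_gt0 ?expR_gt0. Qed.

Lemma gd_bnd (l x : R) : 0 < x ->
  0 <= gamma_dens k l x <= powR x (- (1 / 2)) * expR (- (k / 2 * x)).
Proof.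
move=> x0; rewrite ltW ?gd_pos //= /gamma_dens.
rewrite ler_wpM2l ?powR_ge0 // ler_expR lerN2 -subr_ge0.
rewrite (_ : (l ^+ 2 + k * x ^+ 2) / (2 * x) - k / 2 * x = l ^+ 2 / (2 * x)).
  by rewrite divr_ge0 ?sqr_ge0 // mulr_ge0 // ltW.
by field; rewrite gt_eqF.
Qed.

Lemma gd_int (l : R) : int (gamma_dens k l) /\ int (fun x => x * gamma_dens k l x).
Proof.
apply: (int_gammalike _ (k / 2)); first by rewrite divr_gt0.
  exact: gamma_dens_cont.
exact: gd_bnd.
Qed.

Lemma Eg_pos (l : R) : 0 < mean0 (gamma_dens k l).
Proof.
have [i1 i2] := gd_int l.
apply: mean0_pos => //; [exact: gd_pos | exact: gamma_dens_cont].
Qed.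

Lemma Eg_mono (x y : R) : 0 <= x -> x < y ->
  mean0 (gamma_dens k x) < mean0 (gamma_dens k y).
Proof.
move=> x0 xy.
have d0 : 0 < y ^+ 2 - x ^+ 2 by nra.
set d := y ^+ 2 - x ^+ 2.
have [i1 i2] := gd_int x.
have [i3 i4] := gd_int y.
apply: (tilt _ _ (fun t => expR (- (d / (2 * t))))) => //.
- by move=> t t0; exact: gd_pos.
- by move=> t t0; exact: expR_gt0.
- move=> t t0; rewrite /gamma_dens [RHS]mulrCA -expRD; congr (_ * expR _).
  by rewrite /d; field; rewrite gt_eqF.
- move=> t1 t2 t10 t12; rewrite ltr_expR ltrN2 ltr_pM2l //.
  rewrite ltf_pV2 ?posrE ?mulr_gt0 //; last exact: lt_trans t12.
  by rewrite ltr_pM2l.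
- exact: gamma_dens_cont.
- move=> t; rewrite inD0 => t0.
  apply: (cE (fun t => - (d / (2 * t)))).
  apply: (cN (fun t => d / (2 * t))).
  apply: (cM (fun _ => d) (fun t => (2 * t)^-1)); first exact: cC.
  apply: (cV (fun t => 2 * t)); first by rewrite mulf_neq0 ?gt_eqF.
  exact: (cM _ _ _ (cC 2 t) (cI t)).
Qed.
End gamma.

Section kappa.
Lemma kd_pos (c x : R) : 0 < x -> 0 < kappa_dens c x.
Proof. by move=> x0; rewrite /kappa_dens mulr_gt0 ?expR_gt0. Qed.

Lemma kd_int (c : R) : 0 < c -> int (kappa_dens c) /\ int (fun x => x * kappa_dens c x).
Proof.
move=> c0; apply: (int_kappalike _ (c / 2)); first by rewrite divr_gt0.
  exact: kappa_dens_cont.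
move=> x x0; rewrite ltW ?kd_pos //= /kappa_dens.
by rewrite (_ : c * x / 2 = c / 2 * x) //; rewrite mulrAC.
Qed.

Lemma rho_pos (c : R) : 0 < c -> 0 < mean0 (kappa_dens c).
Proof.
move=> c0; have [i1 i2] := kd_int _ c0.
apply: mean0_pos => //; [exact: kd_pos | exact: kappa_dens_cont].
Qed.

Lemma rho_mono (c c' : R) : 0 < c -> c < c' ->
  mean0 (kappa_dens c') < mean0 (kappa_dens c).
Proof.
move=> c0 cc.
have c'0 : 0 < c' by apply: lt_trans cc.
have [i1 i2] := kd_int _ c0.
have [i3 i4] := kd_int _ c'0.
have d0 : 0 < c' - c by rewrite subr_gt0.
apply: (tilt _ _ (fun t => expR ((c' - c) * t / 2))) => //.
- by move=> t t0; exact: kd_pos.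
- by move=> t t0; exact: expR_gt0.
- move=> t t0; rewrite /kappa_dens mulrCA -expRD; congr (_ * expR _).
  by field.
- move=> t1 t2 t10 t12; rewrite ltr_expR ltr_pM2r ?invr_gt0 //.
  by rewrite ltr_pM2l.
- exact: kappa_dens_cont.
- move=> t _.
  apply: (cE (fun t => (c' - c) * t / 2)).
  apply: (cM (fun t => (c' - c) * t) (fun _ => 2^-1)); last exact: cC.
  exact: (cM _ _ _ (cC (c' - c) t) (cI t)).
Qed.
End kappa.

End S.

Theorem theorem3 (R : realType) (kappa : R) (hk : 0 < kappa) :
  exists rho : R -> R,
    (forall x : R, 0 <= x -> 0 < rho x) /\
    {in `[0, +oo[ &, {homo rho : x y / x < y >-> y < x}} /\
    (forall lam : R, mean_kappa_new kappa lam = rho `|lam|).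
Proof.
have mkE l : mean_kappa_new kappa l = mean0 (kappa_dens (mean0 (gamma_dens kappa l))).
  by rewrite /mean_kappa_new /mean_gamma mpdE mpdE.
exists (fun x => mean_kappa_new kappa x).
split.
  move=> x _; rewrite mkE.
  exact: (rho_pos _ (Eg_pos _ hk x)).
split.
  move=> x y; rewrite !in_itv/= !andbT => x0 y0 xy.
  rewrite (mkE x) (mkE y).
  apply: rho_mono; first exact: Eg_pos.
  exact: Eg_mono.
move=> lam; rewrite /mean_kappa_new /mean_gamma /gamma_dens.
by rewrite real_normK // num_real.
Qed.
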